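(* Let $\mathcal U$ be an update family and let $u^*\in\mathcal S$ be a rational direction with $\alpha^-(u^* )=\infty$. Then there exists $u_0\in S^1\setminus\{u^*\}$ such that the closed arc $[u_0,u^*]$ (the short arc between them) is contained in $\mathcal S$, $\alpha^-(u)=\infty$ for all rational $u\in[u_0,u^*]$, and for every $u\in[u_0,u^*]$ and all $a,b\in\mathbb Z^2$ for which $$J=\big(\mathbb H_{u_0}(a)\cap\mathbb H_{u^*}(b)\big)\setminus\mathbb H_u$$ is non-empty, the set $\mathbb H_u\cup J$ is closed, i.e. $[\mathbb H_u\cup J]=\mathbb H_u\cup J$.
   Context: Update family $\mathcal U$: finite collection of finite subsets of $\mathbb Z^2\setminus\{0\}$; $A_{t+1}=A_t\cup\{x:x+X\subset A_t,\ X\in\mathcal U\}$, $[A]=\bigcup_tA_t$. $\mathbb H_u(a)=\{x\in\mathbb Z^2:\langle x-a,u\rangle<0\}$, $\mathbb H_u=\mathbb H_u(0)$; $u$ stable if $[\mathbb H_u]=\mathbb H_u$, $\mathcal S$ the stable set. For rational $u$ (rational or infinite slope), $\ell_u^-$ is the origin together with the sites of $\{x:\langle x,u\rangle=0\}$ to the left of the origin looking in direction $u$, and $\alpha^-(u)$ is the minimal cardinality of $Z\subset\mathbb Z^2$ such that $[\mathbb H_u\cup Z]$ contains infinitely many sites of $\ell_u^-$ ($\infty$ if none exists). A set of the form $J$ above is called a $u$-iceberg. *)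

(* Defs.v *)
From Stdlib Require Export Reals ZArith List.
Open Scope R_scope.

Definition site := (Z * Z)%type.
Definition vec := (R * R)%type.
Definition siteset := site -> Prop.

Definition update_family := list (list site).
Definition valid_family (U : update_family) : Prop :=
  forall X, In X U -> ~ In (0%Z, 0%Z) X.

Definition sadd (x y : site) : site := ((fst x + fst y)%Z, (snd x + snd y)%Z).

Fixpoint step_iter (U : update_family) (A : siteset) (t : nat) : siteset :=
  match t with
  | O => A
  | S t' => fun x => step_iter U A t' x \/
             exists X, In X U /\ forall y, In y X -> step_iter U A t' (sadd x y)
  end.

Definition closure (U : update_family) (A : siteset) : siteset :=
  fun x => exists t, step_iter U A t x.

Definition set_eq (A B : siteset) : Prop := forall x, A x <-> B x.
Definition union (A B : siteset) : siteset := fun x => A x \/ B x.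

Definition ip (x : site) (u : vec) : R := IZR (fst x) * fst u + IZR (snd x) * snd u.

Definition ssub (x a : site) : site := ((fst x - fst a)%Z, (snd x - snd a)%Z).

Definition Hua (u : vec) (a : site) : siteset := fun x => ip (ssub x a) u < 0.
Definition Hu (u : vec) : siteset := Hua u (0%Z, 0%Z).

Definition unit_vec (u : vec) : Prop := fst u * fst u + snd u * snd u = 1.

Definition stable (U : update_family) (u : vec) : Prop :=
  set_eq (closure U (Hu u)) (Hu u).

(* rational direction: unit vector with rational or infinite slope,
   i.e. parallel to a nonzero integer vector *)
Definition rational_dir (u : vec) : Prop :=
  unit_vec u /\ exists p q : Z, (p <> 0%Z \/ q <> 0%Z) /\
     fst u * IZR q = snd u * IZR p.

(* ℓ_u^- : origin together with the sites of {<x,u> = 0} to the left of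
   the origin looking in direction u, i.e. in direction (-u2, u1). *)
Definition ell_minus (u : vec) : siteset :=
  fun x => ip x u = 0 /\ ip x (- snd u, fst u) >= 0.

Definition finite_set (A : siteset) : Prop :=
  exists L : list site, forall x, A x -> In x L.

(* α^-(u) = ∞ : no finite Z ⊂ Z^2 makes [H_u ∪ Z] contain infinitely many
   sites of ℓ_u^- *)
Definition alpha_minus_infinite (U : update_family) (u : vec) : Prop :=
  forall Z : list site,
    finite_set (fun x => closure U (union (Hu u) (fun y => In y Z)) x /\ ell_minus u x).

(* closed short arc [u0, u1] between unit vectors u0, u1 with u0 <> -u1 *)
Definition in_arc (u0 u1 u : vec) : Prop :=
  unit_vec u /\ exists s t, 0 <= s /\ 0 <= t /\
    fst u = s * fst u0 + t * fst u1 /\ snd u = s * snd u0 + t * snd u1.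

(* Main.v *)
Require Import Defs.
From Stdlib Require Import Reals ZArith List Lra Lia Psatz Classical.
Open Scope R_scope.

Lemma ip_sadd x y u : ip (sadd x y) u = ip x u + ip y u.
Proof. unfold ip, sadd; simpl; rewrite !plus_IZR; ring. Qed.
Lemma ip_ssub x y u : ip (ssub x y) u = ip x u - ip y u.
Proof. unfold ip, ssub; simpl; rewrite !minus_IZR; ring. Qed.
Lemma ssub0 x : ssub x (0%Z,0%Z) = x.
Proof. destruct x; unfold ssub; simpl; f_equal; lia. Qed.
Lemma Hu_iff u x : Hu u x <-> ip x u < 0.
Proof. unfold Hu, Hua; rewrite ssub0; tauto. Qed.

Lemma step_mono_le U A t t' x : (t <= t')%nat -> step_iter U A t x -> step_iter U A t' x.
Proof. induction 1; auto. intro H0; simpl; left; auto. Qed.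

Lemma closure_rule U A X x : In X U -> (forall y, In y X -> closure U A (sadd x y)) -> closure U A x.
Proof.
  intros HX H.
  assert (exists T, forall y, In y X -> step_iter U A T (sadd x y)) as [T HT].
  { clear HX. induction X as [|y0 X IH].
    - exists O; intros y [].
    - destruct (H y0 (or_introl eq_refl)) as [t0 H0].
      destruct IH as [T HT]. { intros y Hy; apply H; right; exact Hy. }
      exists (Nat.max t0 T). intros y [<-|Hy].
      + apply step_mono_le with t0; [lia| exact H0].
      + apply step_mono_le with T; [lia| auto]. }
  exists (S T). simpl. right. exists X. split; auto.
Qed.

Lemma closure_base U A x : A x -> closure U A x.
Proof. intro H; exists O; exact H. Qed.

Lemma closure_ind U A (K: siteset) : (forall x, A x -> K x) ->
  (forall x X, In X U -> (forall y, In y X -> K (sadd x y)) -> K x) ->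
  forall x, closure U A x -> K x.
Proof.
  intros HA HK x [t Ht]. revert x Ht. induction t; simpl; intros x Ht; auto.
  destruct Ht as [Ht|[X [HX Hy]]]; eauto.
Qed.

Lemma closed_set U (K: siteset) :
  (forall x X, In X U -> (forall y, In y X -> K (sadd x y)) -> K x) ->
  set_eq (closure U K) K.
Proof. intros HK x; split; [apply closure_ind; auto | apply closure_base]. Qed.

Lemma list_bound (L: list site) (f: site -> R) :
  exists M, 0 <= M /\ forall y, In y L -> - M <= f y <= M.
Proof.
  induction L as [|a L [M [HM H]]].
  - exists 0; split; [lra| intros y []].
  - exists (Rmax (Rmax (f a) (- f a)) M); split.
    + apply Rle_trans with M; [lra| apply Rmax_r].
    + assert (H1 := Rmax_l (Rmax (f a) (- f a)) M).
      assert (H2 := Rmax_r (Rmax (f a) (- f a)) M).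
      assert (H3 := Rmax_l (f a) (- f a)).
      assert (H4 := Rmax_r (f a) (- f a)).
      intros y [<-|Hy]; [lra|]. specialize (H y Hy). lra.
Qed.

Lemma list_minpos (L: list site) (f: site -> R) :
  exists m, 0 < m /\ forall y, In y L -> 0 < f y -> m <= f y.
Proof.
  induction L as [|a L [m [Hm H]]].
  - exists 1; split; [lra| intros y []].
  - destruct (Rlt_dec 0 (f a)).
    + exists (Rmin (f a) m); split. apply Rmin_pos; auto.
      intros y [<-|Hy] Hp; [apply Rmin_l| apply Rle_trans with m; [apply Rmin_r| auto]].
    + exists m; split; auto. intros y [<-|Hy] Hp; [lra| auto].
Qed.

Lemma delta_lemma (U: update_family) (f: site -> R) :
  (forall X, In X U -> exists y, In y X /\ 0 < f y) ->
  exists d, 0 < d /\ exists Y: list site, (forall y, In y Y -> d <= f y) /\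
     forall X, In X U -> exists y, In y X /\ In y Y.
Proof.
  induction U as [|X0 U IH]; intros H.
  - exists 1; split; [lra|]. exists nil; split; [intros y []| intros X []].
  - destruct (H X0 (or_introl eq_refl)) as [y0 [Hy0 Hf0]].
    destruct IH as [d [Hd [Y [HY1 HY2]]]]. { intros X HX; apply H; right; auto. }
    exists (Rmin d (f y0)); split; [apply Rmin_pos; auto|].
    exists (y0 :: Y); split.
    + intros y [<-|Hy]; [apply Rmin_r| apply Rle_trans with d; [apply Rmin_l| auto]].
    + intros X [<-|HX]; [exists y0; split; [auto| left; auto]|].
      destruct (HY2 X HX) as [y [H1 H2]]; exists y; split; [auto| right; auto].
Qed.

Fixpoint sums (Y: list site) (k: nat) : list site :=
  match k with
  | O => (0%Z,0%Z) :: nil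
  | S k' => flat_map (fun s => map (fun y => sadd s y) Y) (sums Y k')
  end.

Lemma finite_strict U u (Zl: list site) d Y : 0 < d ->
  (forall y, In y Y -> d <= ip y u) ->
  (forall X, In X U -> exists y, In y X /\ In y Y) ->
  finite_set (fun x => closure U (union (Hu u) (fun y => In y Zl)) x /\ ell_minus u x).
Proof.
  intros Hd HY HUY.
  assert (key: forall t x, step_iter U (union (Hu u) (fun y => In y Zl)) t x -> 0 <= ip x u ->
     exists k z s, In z Zl /\ In s (sums Y k) /\ x = ssub z s /\ ip x u + INR k * d <= ip z u).
  { induction t as [|t IH]; intros x Ht Hx; cbn [step_iter] in Ht.
    - destruct Ht as [Ht|Ht]. { apply (proj1 (Hu_iff u x)) in Ht. lra. }
      exists O, x, (0%Z,0%Z). rewrite ssub0. simpl. split; [auto|split; [left; auto|split; [auto|lra]]].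
    - destruct Ht as [Ht|[X [HX Hy]]]; [auto|].
      destruct (HUY X HX) as [y [HyX HyY]].
      specialize (HY y HyY).
      destruct (IH (sadd x y) (Hy y HyX)) as [k [z [s [Hz [Hs [Hxe Hb]]]]]].
      { rewrite ip_sadd; lra. }
      exists (S k), z, (sadd s y). split; [auto|]. split.
      + simpl. apply in_flat_map. exists s. split; auto. apply in_map; auto.
      + split.
        * destruct x, y, z, s; unfold sadd, ssub in *; simpl in *.
          injection Hxe as E1 E2. f_equal; lia.
        * rewrite ip_sadd in Hb. rewrite S_INR. lra. }
  destruct (list_bound Zl (fun z => ip z u)) as [M [HM HMb]].
  destruct (INR_unbounded (M / d)) as [K HK].
  exists (flat_map (fun k => flat_map (fun z => map (fun s => ssub z s) (sums Y k)) Zl) (seq 0 (S K))).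
  intros x [[t Ht] [He _]].
  destruct (key t x Ht (Req_le_sym _ _ He)) as [k [z [s [Hz [Hs [Hxe Hb]]]]]].
  apply in_flat_map. exists k. split.
  - apply in_seq. split; [lia|].
    destruct (le_lt_dec k K) as [Hk|Hk]; [lia|].
    exfalso. apply lt_INR in Hk.
    specialize (HMb z Hz). simpl in HMb.
    assert (M < INR K * d).
    { apply Rmult_lt_compat_r with (r := d) in HK; auto.
      unfold Rdiv in HK. rewrite Rmult_assoc, Rinv_l in HK; lra. }
    assert (INR K * d < INR k * d) by (apply Rmult_lt_compat_r; auto).
    lra.
  - apply in_flat_map. exists z. split; auto. apply in_map_iff. exists s; auto.
Qed.

Lemma rat_dir_vec u : rational_dir u -> exists d: site, ip d u = 0 /\ 0 < ip d (- snd u, fst u).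
Proof.
  intros [Hu [p [q [Hpq Heq]]]]. unfold unit_vec in Hu.
  destruct u as [u1 u2]; simpl in *.
  assert (Hne: IZR q * u2 + IZR p * u1 <> 0).
  { intro H0.
    assert (Ep: IZR p * (u1*u1+u2*u2) = u1 * (IZR q * u2 + IZR p * u1) - u2 * (u1 * IZR q - u2 * IZR p)) by ring.
    assert (Eq: IZR q * (u1*u1+u2*u2) = u2 * (IZR q * u2 + IZR p * u1) + u1 * (u1 * IZR q - u2 * IZR p)) by ring.
    rewrite Hu, H0 in Ep, Eq. replace (u1 * IZR q - u2 * IZR p) with 0 in Ep, Eq by lra.
    assert (IZR p = 0) by lra. assert (IZR q = 0) by lra.
    apply eq_IZR in H. apply eq_IZR in H1. destruct Hpq; auto. }
  destruct (Rlt_dec 0 (IZR q * u2 + IZR p * u1)).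
  - exists ((-q)%Z, p). unfold ip; simpl; rewrite opp_IZR. split; nra.
  - exists (q, (-p)%Z). unfold ip; simpl; rewrite opp_IZR. split. nra.
    assert (IZR q * u2 + IZR p * u1 < 0) by lra. nra.
Qed.

Lemma zbound (L: list site) : exists B, (0 <= B)%Z /\ forall x, In x L -> (Z.abs (fst x) + Z.abs (snd x) <= B)%Z.
Proof.
  induction L as [|a L [B [HB H]]].
  - exists 0%Z; split; [lia| intros x []].
  - exists (Z.abs (fst a) + Z.abs (snd a) + B)%Z. split; [lia|].
    intros x [<-|Hx]; [lia|]. specialize (H x Hx). lia.
Qed.

Definition rng (N: Z) : list Z := map (fun k => Z.of_nat k - N)%Z (seq 0 (Z.to_nat (2*N+1))).
Lemma in_rng N i : (Z.abs i <= N)%Z -> In i (rng N).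
Proof.
  intro H. unfold rng. apply in_map_iff. exists (Z.to_nat (i + N)). split.
  - rewrite Z2Nat.id; lia.
  - apply in_seq. lia.
Qed.

Lemma IZR_nat_mul k z : IZR (Z.of_nat k * z) = INR k * IZR z.
Proof. rewrite mult_IZR, <- INR_IZR_INZ. reflexivity. Qed.

Lemma witness_star U u : valid_family U -> rational_dir u -> alpha_minus_infinite U u ->
  forall X, In X U -> exists y, In y X /\ (0 < ip y u \/ (ip y u = 0 /\ 0 < ip y (- snd u, fst u))).
Proof.
  intros Hval Hrat Halpha X HX. apply NNPP; intro Hn.
  set (w := (- snd u, fst u)).
  assert (Hunit: fst u * fst u + snd u * snd u = 1) by (destruct Hrat; auto).
  assert (Hkey: forall y, In y X -> ip y u < 0 \/ (ip y u = 0 /\ ip y w < 0)).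
  { intros y Hy.
    destruct (Rtotal_order (ip y u) 0) as [H1|[H1|H1]]; [left; auto| |].
    - right; split; auto.
      destruct (Rtotal_order (ip y w) 0) as [H2|[H2|H2]]; auto.
      + exfalso. apply (Hval X HX). destruct y as [y1 y2].
        assert (E1: IZR y1 = ip (y1,y2) u * fst u - ip (y1,y2) w * snd u)
          by (unfold ip, w; simpl; rewrite <- Rmult_1_r at 1; rewrite <- Hunit; ring).
        assert (E2: IZR y2 = ip (y1,y2) u * snd u + ip (y1,y2) w * fst u)
          by (unfold ip, w; simpl; rewrite <- Rmult_1_r at 1; rewrite <- Hunit; ring).
        rewrite H1, H2 in E1, E2.
        replace (0 * fst u - 0 * snd u) with 0 in E1 by ring.
        replace (0 * snd u + 0 * fst u) with 0 in E2 by ring.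
        apply eq_IZR in E1; apply eq_IZR in E2. subst. exact Hy.
      + exfalso; apply Hn; exists y; split; auto.
    - exfalso; apply Hn; exists y; split; auto. }
  destruct (rat_dir_vec u Hrat) as [d [Hd1 Hd2]]. fold w in Hd2.
  destruct (list_bound X (fun y => ip y w)) as [R0 [HR0 HRb]].
  destruct (list_minpos X (fun y => - ip y w)) as [m [Hm Hmb]].
  set (N := up R0).
  assert (HN: R0 < IZR N) by (apply archimed).
  set (Zl := list_prod (rng N) (rng N)).
  set (A := union (Hu u) (fun y => In y Zl)).
  assert (Hu2: -1 <= fst u <= 1 /\ -1 <= snd u <= 1) by (split; split; nra).
  assert (claim: forall n: nat, forall x, ip x u = 0 -> - R0 <= ip x w -> ip x w < INR n * m -> closure U A x).
  { induction n as [|n IH]; intros x Hx1 Hx2 Hx3.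
    - apply closure_base. right. simpl in Hx3. rewrite Rmult_0_l in Hx3.
      destruct x as [x1 x2].
      assert (E1: IZR x1 = ip (x1,x2) u * fst u - ip (x1,x2) w * snd u)
          by (unfold ip, w; simpl; rewrite <- Rmult_1_r at 1; rewrite <- Hunit; ring).
      assert (E2: IZR x2 = ip (x1,x2) u * snd u + ip (x1,x2) w * fst u)
          by (unfold ip, w; simpl; rewrite <- Rmult_1_r at 1; rewrite <- Hunit; ring).
      rewrite Hx1 in E1, E2.
      assert (B1: -IZR N <= IZR x1 <= IZR N) by nra.
      assert (B2: -IZR N <= IZR x2 <= IZR N) by nra.
      unfold Zl. apply in_prod; apply in_rng.
      + destruct B1 as [B1 B1']. apply le_IZR in B1'. rewrite <- opp_IZR in B1. apply le_IZR in B1. lia.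
      + destruct B2 as [B2 B2']. apply le_IZR in B2'. rewrite <- opp_IZR in B2. apply le_IZR in B2. lia.
    - destruct (Rlt_dec (ip x w) (INR n * m)) as [Hl|Hl]; [auto|].
      assert (0 <= INR n * m) by (apply Rmult_le_pos; [apply pos_INR| lra]).
      rewrite S_INR in Hx3.
      apply closure_rule with X; auto. intros y Hy.
      destruct (Hkey y Hy) as [Hk|[Hk1 Hk2]].
      + apply closure_base. left. apply Hu_iff. rewrite ip_sadd. lra.
      + specialize (HRb y Hy). specialize (Hmb y Hy). simpl in HRb, Hmb.
        apply IH; rewrite ip_sadd; lra. }
  destruct (Halpha Zl) as [L HL].
  destruct (zbound L) as [B [HB0 HB]].
  set (k := S (Z.to_nat B)).
  set (P := (Z.of_nat k * fst d, Z.of_nat k * snd d)%Z).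
  assert (HP1: ip P u = INR k * ip d u) by (unfold P, ip; cbn [fst snd]; rewrite !IZR_nat_mul; ring).
  assert (HP2: ip P w = INR k * ip d w) by (unfold P, ip; cbn [fst snd]; rewrite !IZR_nat_mul; ring).
  assert (Hk0: 0 <= INR k) by apply pos_INR.
  assert (HPin: In P L).
  { apply HL. split.
    - destruct (INR_unbounded (INR k * ip d w / m)) as [n Hn'].
      apply (claim n). rewrite HP1, Hd1; ring. rewrite HP2. nra.
      rewrite HP2. apply Rmult_gt_compat_r with (r := m) in Hn'; auto.
      unfold Rdiv in Hn'. rewrite Rmult_assoc, Rinv_l in Hn'; lra.
    - unfold ell_minus. fold w. rewrite HP1, HP2, Hd1. split; [ring| nra]. }
  specialize (HB P HPin). unfold P in HB; cbn [fst snd] in HB.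
  rewrite !Z.abs_mul in HB.
  assert (Hdnz: (Z.abs (fst d) + Z.abs (snd d) >= 1)%Z).
  { destruct d as [d1 d2]; simpl in *.
    destruct (Z.eq_dec d1 0); destruct (Z.eq_dec d2 0); try lia.
    subst. unfold ip in Hd2; simpl in Hd2. lra. }
  assert (Hkz: Z.abs (Z.of_nat k) = (B + 1)%Z) by (unfold k; lia).
  rewrite Hkz in HB. nia.
Qed.

Lemma arc_decomp u0 us u : in_arc u0 us u ->
  exists s t, 0 <= s /\ 0 <= t /\ (forall y, ip y u = s * ip y u0 + t * ip y us) /\
   fst u = s * fst u0 + t * fst us /\ snd u = s * snd u0 + t * snd us.
Proof.
  intros [_ [s [t [Hs [Ht [H1 H2]]]]]]. exists s, t. repeat split; auto.
  intros y; unfold ip; rewrite H1, H2; ring.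
Qed.

Lemma conclusions U us u0 : unit_vec us ->
  alpha_minus_infinite U us ->
  (forall X, In X U -> exists y, In y X /\ 0 <= ip y us /\ 0 < ip y u0) ->
    (forall u, in_arc u0 us u -> stable U u) /\
    (forall u, in_arc u0 us u -> rational_dir u -> alpha_minus_infinite U u) /\
    (forall u, in_arc u0 us u ->
       forall a b : site,
         let J := fun x => Hua u0 a x /\ Hua us b x /\ ~ Hu u x in
         (exists x, J x) ->
         set_eq (closure U (union (Hu u) J)) (union (Hu u) J)).
Proof.
  intros Hus Halpha W. split; [|split].
  - intros u Harc. destruct (arc_decomp _ _ _ Harc) as [s [t [Hs [Ht [Hip _]]]]].
    apply closed_set. intros x X HX H.
    destruct (W X HX) as [y [Hy [Hy1 Hy2]]].
    specialize (H y Hy). apply (proj1 (Hu_iff u _)) in H. apply Hu_iff.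
    rewrite ip_sadd, (Hip y) in H. nra.
  - intros u Harc Hrat.
    destruct (arc_decomp _ _ _ Harc) as [s [t [Hs [Ht [Hip [E1 E2]]]]]].
    destruct (Req_dec s 0) as [Hs0|Hs0].
    + subst s. destruct Harc as [Hu _]. unfold unit_vec in Hu, Hus.
      rewrite E1, E2 in Hu.
      assert (t = 1) by nra. subst t.
      assert (u = us).
      { destruct u, us; simpl in *; f_equal; lra. }
      subst; auto.
    + intros Zl.
      destruct (delta_lemma U (fun y => ip y u)) as [d [Hd [Y [HY1 HY2]]]].
      { intros X HX. destruct (W X HX) as [y [Hy [Hy1 Hy2]]]. exists y; split; auto.
        rewrite Hip. assert (0 < s) by lra. nra. }
      apply (finite_strict U u Zl d Y); auto.
  - intros u Harc a b J _.
    destruct (arc_decomp _ _ _ Harc) as [s [t [Hs [Ht [Hip _]]]]].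
    apply closed_set. intros x X HX H.
    destruct (W X HX) as [y [Hy [Hy1 Hy2]]].
    assert (Hyu: 0 <= ip y u) by (rewrite Hip; nra).
    specialize (H y Hy).
    destruct (classic (Hu u x)) as [Hx|Hx]; [left; auto|right].
    destruct H as [H|H].
    + exfalso; apply Hx. apply (proj1 (Hu_iff u _)) in H. apply Hu_iff. rewrite ip_sadd in H. lra.
    + unfold J in *. destruct H as [H1 [H2 _]]. unfold Hua in *.
      rewrite ip_ssub, ip_sadd in H1, H2. rewrite !ip_ssub. split; [lra|split; [lra|auto]].
Qed.

Theorem mainTheorem13 (U : update_family) (ustar : vec) :
  valid_family U ->
  rational_dir ustar ->
  stable U ustar ->
  alpha_minus_infinite U ustar ->
  exists u0 : vec,
    unit_vec u0 /\ u0 <> ustar /\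
    (* the short arc is well defined *)
    (fst u0 + fst ustar, snd u0 + snd ustar) <> (0, 0) /\
    (forall u, in_arc u0 ustar u -> stable U u) /\
    (forall u, in_arc u0 ustar u -> rational_dir u -> alpha_minus_infinite U u) /\
    (forall u, in_arc u0 ustar u ->
       forall a b : site,
         let J := fun x => Hua u0 a x /\ Hua ustar b x /\ ~ Hu u x in
         (exists x, J x) ->
         set_eq (closure U (union (Hu u) J)) (union (Hu u) J)).
Proof.
  intros Hval Hrat Hstab Halpha.
  pose proof (witness_star U ustar Hval Hrat Halpha) as Wit.
  assert (Hunit: unit_vec ustar) by (destruct Hrat; auto).
  set (w := (- snd ustar, fst ustar)) in Wit.
  destruct (list_bound (concat U) (fun y => ip y w)) as [R1 [HR1 HR1b]].
  destruct (list_minpos (concat U) (fun y => ip y ustar)) as [m1 [Hm1 Hm1b]].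
  set (b := m1 / (2 * (R1 + m1 + 1))).
  assert (Hb: b * (2 * (R1 + m1 + 1)) = m1) by (unfold b; field; lra).
  assert (Hbpos: 0 < b) by (unfold b; apply Rdiv_lt_0_compat; lra).
  assert (Hbhalf: b <= 1/2) by nra.
  set (a := sqrt (1 - b*b)).
  assert (Ha2: a * a = 1 - b*b) by (unfold a; apply sqrt_sqrt; nra).
  assert (Hapos: 0 <= a) by (unfold a; apply sqrt_pos).
  assert (Hahalf: 1/2 <= a) by nra.
  destruct ustar as [u1 u2]. unfold unit_vec in Hunit; simpl in Hunit.
  exists (a * u1 - b * u2, a * u2 + b * u1).
  assert (Hip0: forall y, ip y (a * u1 - b * u2, a * u2 + b * u1) = a * ip y (u1,u2) + b * ip y w)
    by (intros; unfold ip, w; simpl; ring).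
  split; [|split; [|split]].
  - unfold unit_vec; simpl.
    replace ((a * u1 - b * u2) * (a * u1 - b * u2) + (a * u2 + b * u1) * (a * u2 + b * u1))
      with ((a*a + b*b) * (u1*u1+u2*u2)) by ring.
    rewrite Hunit, Ha2; ring.
  - intro E. injection E as E1 E2.
    assert (Eb: - u2 * (a * u1 - b * u2) + u1 * (a * u2 + b * u1) = b * (u1*u1+u2*u2)) by ring.
    rewrite E1, E2, Hunit in Eb. lra.
  - intro E. injection E as E1 E2. simpl in E1, E2.
    assert (Eb: u1 * (a * u1 - b * u2 + u1) + u2 * (a * u2 + b * u1 + u2) = (a+1) * (u1*u1+u2*u2)) by ring.
    rewrite E1, E2, Hunit in Eb. lra.
  - apply conclusions; auto.
    intros X HX. destruct (Wit X HX) as [y [Hy Hc]].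
    assert (Hyc: In y (concat U)) by (apply in_concat; exists X; auto).
    exists y; split; auto. rewrite Hip0.
    destruct Hc as [Hc|[Hc1 Hc2]].
    + specialize (Hm1b y Hyc Hc). specialize (HR1b y Hyc). simpl in Hm1b, HR1b.
      split; [lra|].
      assert (a * ip y (u1,u2) >= a * m1) by nra.
      assert (b * ip y w >= - (b * R1)) by nra.
      nra.
    + rewrite Hc1. split; [lra| nra].
Qed.
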